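(* Let $$A= \begin{pmatrix} 1& -2& 2\\ 2&-1& 2\\ 2&-2& 3 \end{pmatrix}.$$ For every positive integer $n$, the triple $A^n(3,4,5)^\top$ is a primitive Pythagorean triple $(x,y,z)$, and the inradius of the triangle with side lengths $x,y,z$ is $n+1$.
   Context: A primitive Pythagorean triple is a triple $(x,y,z)$ of positive integers with $x^2+y^2=z^2$, $\gcd(x,y)=1$ and $x$ odd. Triples are regarded as row vectors and $\top$ denotes transpose. *)

(* Defs.v *)
From mathcomp Require Import all_boot all_order all_algebra.
Set Implicit Arguments. Unset Strict Implicit. Unset Printing Implicit Defensive.
Import Order.TTheory GRing.Theory Num.Theory.
Local Open Scope ring_scope.

Definition matA : 'M[int]_3 :=
  \matrix_(i < 3, j < 3)
    (nth 0 (nth [::] [:: [:: 1; -2; 2]; [:: 2; -1; 2]; [:: 2; -2; 3]] i) j : int).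

Definition v345 : 'cV[int]_3 := \col_(i < 3) (nth 0 [:: 3; 4; 5] i : int).

Definition primitive_pyth (x y z : int) : Prop :=
  [/\ (0 < x) && (0 < y) && (0 < z), x ^+ 2 + y ^+ 2 = z ^+ 2,
      gcdz x y = 1 & ~~ (2 %| x)%Z].

(* Inradius of a triangle with side lengths a, b, c (Heron):
   r = sqrt((s-a)(s-b)(s-c)/s), s the semiperimeter. *)
Definition inradius (R : rcfType) (a b c : R) : R :=
  let s := (a + b + c) / 2 in Num.sqrt ((s - a) * (s - b) * (s - c) / s).

(* Main.v *)
Require Import Defs.
From mathcomp Require Import all_boot all_order all_algebra ring lra zify.
Import Order.TTheory GRing.Theory Num.Theory.
Local Open Scope ring_scope.
Definition trip (N : int) : 'cV[int]_3 :=
  \col_(i < 3) (nth 0 [:: 2*N+3; 2*(N+1)*(N+2); 2*(N+1)*(N+2)+1] i).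
Lemma powA n : matA ^+ n *m v345 = trip n%:Z.
Proof.
elim: n => [|n IH].
  rewrite expr0 mul1mx; apply/matrixP=> i j; rewrite !mxE.
  by case: i => [[|[|[|]]] ?].
rewrite exprS -mulmxA IH; apply/matrixP=> i j.
rewrite !mxE !big_ord_recl big_ord0 !mxE /=.
case: i => [[|[|[|]]] ?] //=; rewrite /bump /=; have -> : (n.+1)%:Z = n%:Z + 1 by rewrite -addn1 PoszD.
 all: ring.
Qed.

Theorem mainTheorem2 (R : rcfType) (n : nat) : (0 < n)%N ->
  let v := (matA ^+ n *m v345) in
  let x := v 0 0 in let y := v 1 0 in let z := v 2 0 in
  primitive_pyth x y z /\
  inradius (x%:~R : R) (y%:~R) (z%:~R) = (n + 1)%:R.
Proof.
move=> _ v x y z.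
have ex : x = 2 * n%:Z + 3 by rewrite /x /v powA mxE.
have ey : y = 2 * (n%:Z + 1) * (n%:Z + 2) by rewrite /y /v powA mxE.
have ez : z = 2 * (n%:Z + 1) * (n%:Z + 2) + 1 by rewrite /z /v powA mxE.
have hn : 0 <= n%:Z by [].
split.
  split.
  - rewrite ex ey ez; apply/andP; split; [apply/andP; split|]; lia.
  - rewrite ex ey ez; ring.
  - apply/eqP; apply/coprimezP; exists (x, -2) => /=; rewrite ex ey; ring.
  - rewrite ex; lia.
set k : R := n%:R.
have k0 : 0 <= k by rewrite /k ler0n.
have hx : (x%:~R : R) = 2 * k + 3 by rewrite ex /k; ring.
have hy : (y%:~R : R) = 2 * (k + 1) * (k + 2) by rewrite ey /k; ring.
have hz : (z%:~R : R) = 2 * (k + 1) * (k + 2) + 1 by rewrite ez /k; ring.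
have -> : (n + 1)%:R = k + 1 by rewrite natrD.
rewrite hx hy hz /inradius.
have -> : ((2 * k + 3 + 2 * (k + 1) * (k + 2) + (2 * (k + 1) * (k + 2) + 1)) / 2 -
     (2 * k + 3)) * ((2 * k + 3 + 2 * (k + 1) * (k + 2) + (2 * (k + 1) * (k + 2) + 1)) / 2 -
     2 * (k + 1) * (k + 2)) * ((2 * k + 3 + 2 * (k + 1) * (k + 2) + (2 * (k + 1) * (k + 2) + 1)) / 2 -
     (2 * (k + 1) * (k + 2) + 1)) / ((2 * k + 3 + 2 * (k + 1) * (k + 2) + (2 * (k + 1) * (k + 2) + 1)) / 2)
   = (k + 1) ^+ 2.
  field.
  by rewrite -/k gt_eqF //; nra.
by rewrite sqrtr_sqr ger0_norm // addr_ge0.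
Qed.
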